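(* Let $K\subseteq\mathbb{R}^n$ be a proper cone and let $A\in\mathbb{R}^{n\times n}$ be $K$-monotone. Let $A=U-V$ be a $K$-regular splitting and let $U=F-G$ be a $K$-weak regular splitting of type II such that $VF^{-1}G=GF^{-1}V$. Fix a positive integer $s$ and let $$T_{s}=(F^{-1}G)^{s}+\sum_{j=0}^{s-1}(F^{-1}G)^{j}F^{-1}V,\qquad \widehat{T}_{s}=(GF^{-1})^{s}+\sum_{j=0}^{s-1}(GF^{-1})^{j}VF^{-1}.$$ Then $T_s$ and $\widehat T_s$ induce the same splitting $A=B-C$, where $B=A(I-T_s)^{-1}$ and $C=B-A$ (so $T_s=B^{-1}C$); that is, $X:=(I-\widehat{T}_s)^{-1}A$ equals $B$, and with $Y:=X-A$ one has $\widehat T_s = YX^{-1}$. Further, $A=X-Y$ is the unique splitting of $A$ with $\widehat T_s=YX^{-1}$, and it is a $K$-weak regular splitting of type II.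
   Context: A proper cone $K\subseteq\mathbb{R}^n$ is a closed, convex, pointed, solid cone. For $M\in\mathbb{R}^{n\times n}$, $M\geq_K 0$ means $MK\subseteq K$. A matrix $A$ is $K$-monotone if $A$ is nonsingular and $A^{-1}\geq_K 0$. A splitting $A=U-V$ (with $U$ nonsingular) is $K$-regular if $U^{-1}\geq_K 0$ and $V\geq_K 0$; it is a $K$-weak regular splitting of type II if $U^{-1}\geq_K 0$ and $VU^{-1}\geq_K 0$. A splitting $A=X-Y$ is said to be induced by a matrix $T$ if $T=X^{-1}Y$ (respectively, for type II considerations, $T=YX^{-1}$). *)

(* Defs.v *)
From HB Require Import structures.
From mathcomp Require Import all_boot all_order all_algebra.
From mathcomp Require Import all_classical all_reals all_analysis.
Set Implicit Arguments. Unset Strict Implicit. Unset Printing Implicit Defensive.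
Import Order.TTheory GRing.Theory Num.Theory.
Import numFieldNormedType.Exports.
Local Open Scope classical_set_scope.
Local Open Scope ring_scope.

Definition is_cone (R : realType) (n : nat) (K : set 'cV[R]_n) : Prop :=
  K 0 /\ forall (a : R) x, 0 <= a -> K x -> K (a *: x).

Definition is_convex_set (R : realType) (n : nat) (K : set 'cV[R]_n) : Prop :=
  forall (t : R) x y, 0 <= t -> t <= 1 -> K x -> K y -> K (t *: x + (1 - t) *: y).

Definition is_pointed (R : realType) (n : nat) (K : set 'cV[R]_n) : Prop :=
  forall x, K x -> K (- x) -> x = 0.

Definition is_solid (R : realType) (n : nat) (K : set 'cV[R]_n) : Prop :=
  (interior K) !=set0.

Definition proper_cone (R : realType) (n : nat) (K : set 'cV[R]_n) : Prop :=
  [/\ is_cone K, closed K, is_convex_set K, is_pointed K & is_solid K].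

Definition K_nonneg (R : realType) (n : nat) (K : set 'cV[R]_n) (M : 'M[R]_n) : Prop :=
  forall x, K x -> K (M *m x).

Definition K_monotone (R : realType) (n : nat) (K : set 'cV[R]_n) (A : 'M[R]_n) : Prop :=
  A \in unitmx /\ K_nonneg K (invmx A).

Definition K_regular_splitting (R : realType) (n : nat) (K : set 'cV[R]_n)
  (A U V : 'M[R]_n) : Prop :=
  [/\ A = U - V, U \in unitmx, K_nonneg K (invmx U) & K_nonneg K V].

Definition K_weak_regular_II (R : realType) (n : nat) (K : set 'cV[R]_n)
  (A U V : 'M[R]_n) : Prop :=
  [/\ A = U - V, U \in unitmx, K_nonneg K (invmx U) & K_nonneg K (V *m invmx U)].

Definition Ts (R : realType) (n : nat) (F G V : 'M[R]_n) (s : nat) : 'M[R]_n :=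
  (invmx F *m G) ^+ s + \sum_(j < s) ((invmx F *m G) ^+ j *m invmx F *m V).

Definition That (R : realType) (n : nat) (F G V : 'M[R]_n) (s : nat) : 'M[R]_n :=
  (G *m invmx F) ^+ s + \sum_(j < s) ((G *m invmx F) ^+ j *m V *m invmx F).

(* Main.v *)
Require Import Defs.
From HB Require Import structures.
From mathcomp Require Import all_boot all_order all_algebra.
From mathcomp Require Import all_classical all_reals all_analysis.
From mathcomp Require Import lra.
Import Order.TTheory GRing.Theory Num.Theory.
Import numFieldNormedType.Exports.
Local Open Scope ring_scope.

Section Cone.
Variables (R : realType) (n : nat) (K : set 'cV[R]_n).
Hypothesis hK : proper_cone K.

Lemma K0 : K 0. Proof. by case: hK => -[]. Qed.
Lemma KZ a x : 0 <= a -> K x -> K (a *: x). Proof. by case: hK => -[_ ?] *; auto. Qed.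
Lemma KD x y : K x -> K y -> K (x + y).
Proof.
move=> Kx Ky; case: hK => _ _ cv _ _.
have h := cv (2^-1) x y.
have -> : x + y = 2 *: (2^-1 *: x + (1 - 2^-1) *: y).
  rewrite scalerDr !scalerA mulrBr mulr1 mulfV ?pnatr_eq0 //.
  by rewrite scale1r (_ : 2 - 1 = 1 :> R) ?scale1r //; lra.
apply: KZ => //; apply: h => //; rewrite ?invr_ge0 ?ler0n // invf_le1 ?ler1n //.
Qed.
Lemma Ksum (I : Type) (r : seq I) (P : pred I) (f : I -> 'cV_n) :
  (forall i, P i -> K (f i)) -> K (\sum_(i <- r | P i) f i).
Proof. by move=> h; apply: big_ind => //; [exact: K0| exact: KD]. Qed.

Lemma Kpointed x : K x -> K (- x) -> x = 0.
Proof. by case: hK => _ _ _ p _; apply: p. Qed.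

Lemma Kinterior : exists e, K e /\ forall x, exists c : R, 0 < c /\ K (c *: e - x) /\ K (c *: e + x).
Proof.
case: hK => _ _ _ _ [e ie].
have /nbhs_normP [r r0 hr] := ie.
exists e; split; first by apply: hr => /=; rewrite subrr normr0.
move=> x.
pose t := r / (2 * (`|x| + 1)).
have nx : 0 <= `|x| by [].
have t0 : 0 < t by rewrite divr_gt0 // mulr_gt0 // ltr_pwDr.
have tx : t * `|x| < r.
  rewrite /t mulrAC ltr_pdivrMr ?mulr_gt0 ?ltr_pwDr //.
  have r0' : 0 < r := r0.
  rewrite ltr_pM2l //; lra.
have Kp : forall y, `|y| = `|x| -> K (e + t *: y).
  move=> y hy; apply: hr; rewrite /= opprD addrA subrr sub0r normrN.
  by rewrite mx_normZ gtr0_norm // hy.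
have ti : 0 <= t^-1 by rewrite invr_ge0 ltW.
exists t^-1; split; first by rewrite invr_gt0.
split.
  have := KZ _ _ ti (Kp (- x) (normrN x)).
  by rewrite scalerDr scalerA mulVf ?gt_eqF // scale1r.
have := KZ _ _ ti (Kp x erefl).
by rewrite scalerDr scalerA mulVf ?gt_eqF // scale1r.
Qed.

Lemma Kn_mul (M N : 'M[R]_n) : K_nonneg K M -> K_nonneg K N -> K_nonneg K (M * N).
Proof. by move=> hM hN x Kx; rewrite -mulmxE -mulmxA; apply/hM/hN. Qed.
Lemma Kn_1 : K_nonneg K (1 : 'M[R]_n).
Proof. by move=> x Kx; rewrite -idmxE mul1mx. Qed.
Lemma Kn_add (M N : 'M[R]_n) : K_nonneg K M -> K_nonneg K N -> K_nonneg K (M + N).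
Proof. by move=> hM hN x Kx; rewrite mulmxDl; apply: KD; [apply: hM|apply: hN]. Qed.
Lemma Kn_exp (M : 'M[R]_n) k : K_nonneg K M -> K_nonneg K (M ^+ k).
Proof. move=> hM; elim: k => [|k IH]; first exact: Kn_1. by rewrite exprS; apply: Kn_mul. Qed.
Lemma Kn_sum (I : Type) (r : seq I) (P : pred I) (f : I -> 'M[R]_n) :
  (forall i, P i -> K_nonneg K (f i)) -> K_nonneg K (\sum_(i <- r | P i) f i).
Proof. by move=> h x Kx; rewrite mulmx_suml; apply: Ksum => i Pi; apply: h. Qed.

Lemma key (W P M T : 'M[R]_n) : K_nonneg K W -> K_nonneg K P -> K_nonneg K M ->
  K_nonneg K T -> P \in unitmx -> W * (1 - M) = P * (1 + T) ->
  forall x : 'cV[R]_n, M *m x = x -> x = 0.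
Proof.
move=> hW hP hM hT Pu hWP x Mx.
have [e [Ke hb]] := Kinterior.
have [c [c0 [Km Kp]]] := hb x.
have idm m : W - W * M ^+ m = P * (1 + T) * \sum_(i < m) M ^+ i.
  have h1 : 1 - M ^+ m = (1 - M) * \sum_(i < m) M ^+ i.
    by rewrite -opprB subrX1 -mulNr opprB.
  by rewrite -[X in X - _]mulr1 -mulrBr h1 mulrA hWP.
have Mjx j : M ^+ j *m x = x.
  elim: j => [|j IH]; first by rewrite expr0 -(idmxE R n) mul1mx.
  by rewrite exprS -mulmxE -mulmxA IH.
have sumx m : (\sum_(i < m) M ^+ i) *m x = m%:R *: x.
  rewrite mulmx_suml (eq_bigr (fun _ => x)) => [|i _]; last exact: Mjx.
  by rewrite sumr_const card_ord scaler_nat.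
have K1 m : K (W *m e - P *m ((\sum_(i < m) M ^+ i) *m e)).
  have -> : W *m e - P *m ((\sum_(i < m) M ^+ i) *m e) =
     (W * M ^+ m + P * T * \sum_(i < m) M ^+ i) *m e.
    rewrite mulmxA -mulmxBl; congr (_ *m _).
    apply/eqP; rewrite -subr_eq0; apply/eqP.
    have := idm m; rewrite mulrDr mulr1 mulrDl => h.
    rewrite !mulmxE.
    by rewrite -addrA -opprD addrCA opprD addrA h subrr.
  suff hN : K_nonneg K (W * M ^+ m + P * T * \sum_(i < m) M ^+ i) by apply: hN.
  apply: Kn_add; first by apply: Kn_mul => //; apply: Kn_exp.
  apply: Kn_mul; first exact: Kn_mul.
  by apply: Kn_sum => i _; apply: Kn_exp.
have hPS m : K_nonneg K (P * \sum_(i < m) M ^+ i).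
  by apply: Kn_mul => //; apply: Kn_sum => i _; apply: Kn_exp.
have K3 m : K (c *: (W *m e) - m%:R *: (P *m x)).
  have := KD _ _ (KZ _ _ (ltW c0) (K1 m)) (hPS m _ Km).
  by rewrite -mulmxE -mulmxA mulmxBr sumx mulmxBr -!scalemxAr scalerBr addrA subrK.
have K4 m : K (c *: (W *m e) + m%:R *: (P *m x)).
  have := KD _ _ (KZ _ _ (ltW c0) (K1 m)) (hPS m _ Kp).
  by rewrite -mulmxE -mulmxA mulmxDr sumx mulmxDr -!scalemxAr scalerBr addrA subrK.
set a := c *: (W *m e).
have lim : forall sg : R, (sg = 1 \/ sg = -1) -> K (- (sg *: (P *m x))).
  move=> sg hsg.
  pose u := fun m : nat => harmonic m *: a + - (sg *: (P *m x)).
  have Ku : forall m, K (u m).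
    move=> m; rewrite /u /=.
    case: hsg => ->; rewrite ?scale1r ?scaleN1r ?opprK.
      have := KZ _ _ (ltW (harmonic_gt0 m)) (K3 m.+1).
      by rewrite /= scalerBr [X in _ - X]scalerA mulVf ?pnatr_eq0 // scale1r.
    have := KZ _ _ (ltW (harmonic_gt0 m)) (K4 m.+1).
    by rewrite /= scalerDr [X in _ + X]scalerA mulVf ?pnatr_eq0 // scale1r.
  have cu : (u @ \oo --> 0 *: a + - (sg *: (P *m x)))%classic.
    apply: cvgD; last exact: cvg_cst.
    by apply: cvgZr_tmp; exact: cvg_harmonic.
  have cK : closed K by case: hK.
  have := closed_cvg K cK (nearW _ Ku) _ cu.
  by rewrite scale0r add0r; apply; typeclasses eauto.
have Px0 : P *m x = 0.
  apply: Kpointed; last by have := lim 1 (or_introl erefl); rewrite scale1r.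
  by have := lim (-1) (or_intror erefl); rewrite scaleN1r opprK.
by rewrite -(mulKmx Pu x) Px0 mulmx0.
Qed.
End Cone.

Section Alg.
Variables (R : realType) (n : nat).
Implicit Types (A B N X : 'M[R]_n).

Lemma geomL (Z : 'M[R]_n) m : (1 - Z) * \sum_(i < m) Z ^+ i = 1 - Z ^+ m.
Proof.
elim: m => [|m IH]; first by rewrite big_ord0 mulr0 expr0 subrr.
by rewrite big_ord_recr /= mulrDr IH mulrBl mul1r -exprS addrA subrK.
Qed.
Lemma geomR (Z : 'M[R]_n) m : (\sum_(i < m) Z ^+ i) * (1 - Z) = 1 - Z ^+ m.
Proof.
elim: m => [|m IH]; first by rewrite big_ord0 mul0r expr0 subrr.
by rewrite big_ord_recr /= mulrDl IH mulrBr mulr1 -exprSr addrA subrK.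
Qed.
Lemma rK N X : N \in unitmx -> X * N * invmx N = X.
Proof. by move=> u; rewrite -!mulmxE mulmxK. Qed.
Lemma rKV N X : N \in unitmx -> X * invmx N * N = X.
Proof. by move=> u; rewrite -!mulmxE mulmxKV. Qed.
Lemma lK N X : N \in unitmx -> invmx N * (N * X) = X.
Proof. by move=> u; rewrite -!mulmxE mulKmx. Qed.
Lemma lKV N X : N \in unitmx -> N * (invmx N * X) = X.
Proof. by move=> u; rewrite -!mulmxE mulKVmx. Qed.
Lemma mV N : N \in unitmx -> N * invmx N = 1.
Proof. by move=> u; rewrite -mulmxE mulmxV // idmxE. Qed.
Lemma Vm N : N \in unitmx -> invmx N * N = 1.
Proof. by move=> u; rewrite -mulmxE mulVmx // idmxE. Qed.
Lemma uM A B : (A * B \in unitmx) = (A \in unitmx) && (B \in unitmx).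
Proof. by rewrite -mulmxE unitmx_mul. Qed.
Lemma rcancel N X Y : N \in unitmx -> X * N = Y * N -> X = Y.
Proof. by move=> u h; rewrite -(rK N X u) h rK. Qed.
Lemma lcancel N X Y : N \in unitmx -> N * X = N * Y -> X = Y.
Proof. by move=> u h; rewrite -(lK N X u) h lK. Qed.
Lemma inj_unit (S : 'M[R]_n) : (forall x : 'cV[R]_n, S *m x = 0 -> x = 0) -> S \in unitmx.
Proof.
move=> h; rewrite unitmxE unitfE; apply/negP; rewrite -det_tr => /det0P [v v0 hv].
have : S *m v^T = 0 by rewrite -(trmxK S) -trmx_mul hv trmx0.
move/h => /(congr1 trmx); rewrite trmxK trmx0 => v00.
by move: v0; rewrite v00 eqxx.
Qed.
Lemma comm_pow (L M N : 'M[R]_n) j : L * M = N * L -> L * M ^+ j = N ^+ j * L.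
Proof.
move=> h; elim: j => [|j IH]; first by rewrite !expr0 mulr1 mul1r.
by rewrite exprS mulrA h -mulrA IH mulrA -exprS.
Qed.
Lemma comm_sum (L M N : 'M[R]_n) m : L * M = N * L ->
  L * \sum_(j < m) M ^+ j = (\sum_(j < m) N ^+ j) * L.
Proof.
move=> h; rewrite mulr_sumr mulr_suml; apply: eq_bigr => j _; exact: comm_pow.
Qed.
End Alg.
Arguments comm_sum {R n L M N} m.
Arguments comm_pow {R n L M N} j.
Arguments rK {R n N X}. Arguments rKV {R n N X}. Arguments lK {R n N X}.
Arguments lKV {R n N X}. Arguments rcancel {R n N X Y}. Arguments lcancel {R n N X Y}.

Theorem theorem3p6 (R : realType) (n : nat) (K : set 'cV[R]_n)
  (A U V F G : 'M[R]_n) (s : nat) :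
  proper_cone K ->
  K_monotone K A ->
  K_regular_splitting K A U V ->
  K_weak_regular_II K U F G ->
  V *m invmx F *m G = G *m invmx F *m V ->
  (0 < s)%N ->
  let B := A *m invmx (1%:M - Ts F G V s) in
  let C := B - A in
  let X := invmx (1%:M - That F G V s) *m A in
  let Y := X - A in
  [/\ (1%:M - Ts F G V s) \in unitmx /\ (1%:M - That F G V s) \in unitmx,
      B \in unitmx /\ Ts F G V s = invmx B *m C,
      X = B /\ That F G V s = Y *m invmx X,
      (forall X' Y' : 'M[R]_n, A = X' - Y' -> X' \in unitmx ->
          That F G V s = Y' *m invmx X' -> X' = X /\ Y' = Y)
    & K_weak_regular_II K A X Y].
Proof.
move=> hK [Au _] [hAUV Uu hUi hV] [hUFG Fu hFi hGF] hc s0; cbv zeta.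
rewrite /Ts /That !mulmxE !idmxE in hc *.
set Fi := invmx F.
set P := Fi * G. set Q := G * Fi.
set SP := \sum_(j < s) P ^+ j. set SQ := \sum_(j < s) Q ^+ j.
have FFi : F * Fi = 1 by rewrite mV.
have FiF : Fi * F = 1 by rewrite Vm.
have AE : A = F - G - V by rewrite hAUV hUFG.
have FiA : Fi * A = 1 - P - Fi * V by rewrite AE !mulrBr FiF.
have AFi : A * Fi = 1 - Q - V * Fi by rewrite AE !mulrBl FFi.
have ETs : 1 - (P ^+ s + \sum_(j < s) P ^+ j * Fi * V) = SP * Fi * A.
  rewrite -mulrA FiA mulrBr geomR /SP mulr_suml opprD addrA; congr (_ - _).
  by apply: eq_bigr => j _; rewrite mulrA.
have ETh : 1 - (Q ^+ s + \sum_(j < s) Q ^+ j * V * Fi) = SQ * A * Fi.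
  rewrite -mulrA AFi mulrBr geomR /SQ mulr_suml opprD addrA; congr (_ - _).
  by apply: eq_bigr => j _; rewrite !mulrA.
rewrite ETs ETh.
have QA : Q * A = A * P.
  by rewrite /Q /P AE !mulrBl !mulrBr !mulrA FFi mul1r -(mulrA G Fi F) FiF mulr1 hc.
have SQA : SQ * A = A * SP by rewrite /SP /SQ (comm_sum s (esym QA)).
have FP : F * P = Q * F by rewrite /P /Q mulrA FFi mul1r -mulrA FiF mulr1.
have FSP : F * SP = SQ * F by rewrite /SP /SQ (comm_sum s FP).
have Fiu : Fi \in unitmx by rewrite unitmx_inv.
have hQ : K_nonneg K Q by [].
have SQu : SQ \in unitmx.
  apply: inj_unit => x hx.
  have Qsx : Q ^+ s *m x = x.
    have : ((1 - Q) * SQ) *m x = 0 by rewrite -mulmxE -mulmxA hx mulmx0.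
    rewrite geomL mulmxBl -idmxE mul1mx => /eqP; rewrite subr_eq0 => /eqP h.
    by rewrite -h.
  case: s s0 @SQ @SP ETs ETh SQA FSP hx Qsx => // s' _ SQ SP ETs ETh SQA FSP hx Qsx.
  apply: (@key R n K hK (invmx U) Fi (Q ^+ s'.+1) (Q * \sum_(k < s') Q ^+ k) hUi hFi) => //.
  - exact: Kn_exp.
  - apply: Kn_mul => //; apply: Kn_sum => // k _; exact: Kn_exp.
  - have UQ : U = (1 - Q) * F by rewrite hUFG mulrBl mul1r /Q -mulrA FiF mulr1.
    have UQ' : invmx U * (1 - Q) = Fi.
      by rewrite -[LHS](@rK R n F) // -(mulrA _ (1 - Q)) -UQ Vm // mul1r.
    rewrite -geomL mulrA UQ' mulr_sumr big_ord_recl expr0 mulrDr mulr_sumr mulr_sumr.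
    by congr (_ + _); apply: eq_bigr => i _; rewrite /= exprS.
have SPE : SP = Fi * SQ * F by rewrite -mulrA -FSP mulrA FiF mul1r.
have SPu : SP \in unitmx by rewrite SPE !uM Fiu SQu Fu.
have u1 : SP * Fi * A \in unitmx by rewrite !uM SPu Fiu Au.
have u2 : SQ * A * Fi \in unitmx by rewrite !uM SQu Au Fiu.
have SPFi : SP * Fi = Fi * SQ by rewrite SPE -!mulrA FFi mulr1.
set B := A * invmx (SP * Fi * A).
set M := SQ * A * Fi.
set X := invmx M * A.
have BT : B * (SP * Fi * A) = A by rewrite /B rKV.
have Bu : B \in unitmx by rewrite /B uM Au unitmx_inv.
have BSF : B * (SP * Fi) = 1.
  by apply: (rcancel Au); rewrite mul1r -mulrA BT.
have iB : invmx B = SP * Fi by rewrite -[LHS]mulr1 -BSF lK.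
have MB : M * B = A.
  apply: (rcancel u1); rewrite -mulrA BT /M !mulrA SQA.
  by rewrite -!mulrA.
have XB : X = B by rewrite /X -MB lK.
have Xu : X \in unitmx by rewrite XB.
have AX : A * invmx X = M by rewrite XB -{1}MB rK.
have ThE : (Q ^+ s + \sum_(j < s) Q ^+ j * V * Fi) = (X - A) * invmx X.
  by rewrite mulrBl mV // AX /M -ETh subKr.
split.
- by [].
- split => //.
  by rewrite mulrBr Vm // -BT (lK Bu) -ETs subKr.
- by split.
- move=> X' Y' hA X'u hT.
  have hY : Y' = X' - A by rewrite hA subKr.
  suff hX : X' = X by split => //; rewrite hY hX.
  have : 1 - M = 1 - A * invmx X'.
    by rewrite /M -ETh subKr hT hY mulrBl mV.
  move/addrI/oppr_inj => hM.
  have AM : A = M * X' by rewrite hM rKV.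
  by rewrite /X AM lK.
- split.
  + by rewrite subKr.
  + exact: Xu.
  + rewrite XB iB SPFi; apply: Kn_mul => //; apply: Kn_sum => // j _; exact: Kn_exp.
  + rewrite mulmxE -ThE; apply: Kn_add => //; first exact: Kn_exp.
    apply: Kn_sum => // j _; apply: Kn_mul => //; apply: Kn_mul => //; exact: Kn_exp.
Qed.
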